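(* Fix a time frame $t$ and a time slot $\tau\in\{tK,tK+1,\dots,tK+K-1\}$, and consider the setting described in the context, with all data fixed except the decision variables of the respective problem. Then each of the following four optimization problems is a convex optimization problem, i.e. its feasible set is convex and its objective function is convex on it. $\mathcal{P}_{5-1}$ (variables $y_i(\tau)\in[0,1]$, $i\in\mathcal I$; $b_i(\tau),f_i(\tau),z_i(\tau)$ fixed): minimize $\sum_{i\in\mathcal I}H_i(\tau)z_i(\tau)\sum_{m\in\mathcal M}\big(T^{ul}_{i,m}(\tau)+T^{ud}_{i,m}(\tau)\big)+E(\tau)\sum_{i\in\mathcal I}\sum_{m\in\mathcal M}z_i(\tau)\big(E^{ul}_{i,m}(\tau)+E^{ud}_{i,m}(\tau)\big)-V\sum_{i\in\mathcal I}A_i(\tau)$. $\mathcal{P}_{5-2}$ (variables $b_i(\tau)\in(0,1]$, $i\in\mathcal I$; $y_i(\tau),f_i(\tau),z_i(\tau)$ fixed): minimize $\sum_{i\in\mathcal I}H_i(\tau)z_i(\tau)\sum_{m\in\mathcal M}\big(T^{ul}_{i,m}(\tau)+T^{ofld}_{i,m}(\tau)\big)+E(\tau)\sum_{i\in\mathcal I}\sum_{m\in\mathcal M}z_i(\tau)\big(E^{ul}_{i,m}(\tau)+E^{ofld}_{i,m}(\tau)\big)$ subject to $\sum_{i\in\mathcal I}a_{i,m}(t)b_i(\tau)\le 1$ for all $m\in\mathcal M$. $\mathcal{P}_{5-3}$ (variables $f_i(\tau)\in(0,1]$, $i\in\mathcal I$; $y_i(\tau),b_i(\tau),z_i(\tau)$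 fixed): minimize $\sum_{i\in\mathcal I}H_i(\tau)\Big(\sum_{m\in\mathcal M}T^{pl}_{i,m}(t)/K+z_i(\tau)\sum_{m\in\mathcal M}T^{ud}_{i,m}(\tau)+T^{exec}_i(\tau)\Big)+E(\tau)\sum_{i\in\mathcal I}\Big(\sum_{m\in\mathcal M}E^{pl}_{i,m}(t)/K+\sum_{m\in\mathcal M}z_i(\tau)E^{ud}_{i,m}(\tau)+E^{exec}_i(\tau)\Big)$ subject to $\sum_{i\in\mathcal I}a_{i,m}(t)f_i(\tau)\le 1$ for all $m\in\mathcal M$. $\mathcal{P}_{5-4}$ (variables $z_i(\tau)\in[0,1]$, $i\in\mathcal I$; $y_i(\tau),b_i(\tau),f_i(\tau)$ fixed): minimize $\sum_{i\in\mathcal I}H_i(\tau)\Big[z_i(\tau)\sum_{m\in\mathcal M}\big(T^{ul}_{i,m}(\tau)+T^{ud}_{i,m}(\tau)+T^{ofld}_{i,m}(\tau)\big)+T^{exec}_i(\tau)\Big]+E(\tau)\sum_{i\in\mathcal I}\Big[\sum_{m\in\mathcal M}z_i(\tau)\big(E^{ul}_{i,m}(\tau)+E^{ud}_{i,m}(\tau)+E^{ofld}_{i,m}(\tau)\big)+E^{exec}_i(\tau)\Big]-V\sum_{i\in\mathcal I}A_i(\tau)$.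
   Context: Finite sets $\mathcal I$ (users, ''physical twins'') and $\mathcal M$ (edge servers). $K$ is a positive integer. Fixed nonnegative constants: queue backlogs $H_i(\tau)\ge0$ ($i\in\mathcal I$) and $E(\tau)\ge 0$; $V>0$. Fixed access indicators $a_{i,m}(t)\in\{0,1\}$ with $\sum_{m}a_{i,m}(t)\le 1$ for each $i$, and fixed granularities $x_i(t)\in[0,1]$. Positive constants: $D_i(t),S_i(\tau),\lambda_i(\tau),p_i,C_i,F_i,\rho_i$ for $i\in\mathcal I$; $C_m,F_m,\rho_m,B_m$ for $m\in\mathcal M$; $N_0>0$; distances $S_{i,m}(\tau)>0$; path-loss exponent $\theta\ge 2$; complex fading coefficients $h_{i,m}(\tau)$; a constant $g_i^{local}\in[0,1]$. The decision variables (when not optimized in the given problem they are fixed constants in the same ranges) are $y_i(\tau)\in[0,1]$, $b_i(\tau)\in(0,1]$, $f_i(\tau)\in(0,1]$, $z_i(\tau)\in[0,1]$. The quantity $f_i(tK)$ equals the variable $f_i(\tau)$ if $\tau=tK$, and is otherwise a fixed constant in $(0,1]$. Definitions: transmission rate $r_{i,m}(\tau)=a_{i,m}(t)b_i(\tau)B_m\log\!\Big(1+\frac{(S_{i,m}(\tau))^\theta p_i|h_{i,m}(\tau)|^2}{N_0 b_i(\tau)B_m}\Big)$; $T^{ul}_{i,m}(\tau)=\frac{y_i(\tau)S_i(\tau)}{r_{i,m}(\tau)}$, $E^{ul}_{i,m}(\tau)=p_iT^{ul}_{i,m}(\tau)$; $T^{ofld}_{i,m}(\tau)=\frac{\lambda_i(\tau)}{r_{i,m}(\tau)}$,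 $E^{ofld}_{i,m}(\tau)=p_iT^{ofld}_{i,m}(\tau)$; (convention: when $a_{i,m}(t)=0$, the terms $T^{ul}_{i,m},E^{ul}_{i,m},T^{ofld}_{i,m},E^{ofld}_{i,m}$ are taken to be $0$); $T^{ud}_{i,m}(\tau)=\frac{a_{i,m}(t)y_i(\tau)S_i(\tau)C_m}{f_i(\tau)F_m}$, $E^{ud}_{i,m}(\tau)=\rho_mf_i(\tau)F_m^3T^{ud}_{i,m}(\tau)$; $T^{pl}_{i,m}(t)=\frac{a_{i,m}(t)x_i(t)D_i(t)C_m}{f_i(tK)F_m}$, $E^{pl}_{i,m}(t)=\rho_mf_i(tK)F_m^3T^{pl}_{i,m}(t)$; $T^{exec}_i(\tau)=\sum_{m}a_{i,m}(t)z_i(\tau)\frac{\lambda_i(\tau)C_m}{f_i(\tau)F_m}+(1-z_i(\tau))\frac{\lambda_i(\tau)C_i}{F_i}$; $E^{exec}_i(\tau)=\sum_m a_{i,m}(t)z_i(\tau)\rho_mF_m^2\lambda_i(\tau)C_m+(1-z_i(\tau))\rho_iF_i^2\lambda_i(\tau)C_i$; accuracy $A_i(\tau)=z_i(\tau)g_i^{edge}(d_i(\tau))+(1-z_i(\tau))g_i^{local}$ with $d_i(\tau)=x_i(t)D_i(t)+y_i(\tau)S_i(\tau)$ and $g_i^{edge}(d)=1-\big(1-\frac{d}{D_i(t)+S_i(\tau)}\big)^2$. *)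

(* Defs.v *)
From HB Require Import structures.
From mathcomp Require Import all_boot all_order all_algebra.
From mathcomp Require Import reals exp.
From mathcomp Require Import complex.
Set Implicit Arguments. Unset Strict Implicit. Unset Printing Implicit Defensive.
Import Order.TTheory GRing.Theory Num.Theory.
Local Open Scope ring_scope.

Record data (R : realType) (I M : finType) := Data {
  Hq : I -> R;            (* queue backlogs H_i(tau) *)
  Eq : R;                 (* energy queue E(tau) *)
  Vw : R;
  acc : I -> M -> R;
  gran : I -> R;
  Dt : I -> R;
  St : I -> R;
  lam : I -> R;
  pw : I -> R;
  Cu : I -> R;
  Fu : I -> R;
  rhou : I -> R;
  Cs : M -> R;
  Fs : M -> R;
  rhos : M -> R;
  Bs : M -> R;
  N0 : R;
  dist : I -> M -> R;
  theta : R;              (* path-loss exponent *)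
  fad : I -> M -> R[i];
  glocal : I -> R
}.

Section Model.
Variables (R : realType) (I M : finType) (d : data R I M).

Definition rate (b : I -> R) i m : R :=
  acc d i m * b i * Bs d m *
  ln (1 + (dist d i m `^ theta d) * pw d i * (ComplexField.Normc.normc (fad d i m)) ^+ 2
          / (N0 d * b i * Bs d m)).

Definition Tul (y b : I -> R) i m : R :=
  if acc d i m == 0 then 0 else y i * St d i / rate b i m.
Definition Eul (y b : I -> R) i m : R := pw d i * Tul y b i m.
Definition Tofld (b : I -> R) i m : R :=
  if acc d i m == 0 then 0 else lam d i / rate b i m.
Definition Eofld (b : I -> R) i m : R := pw d i * Tofld b i m.
Definition Tud (y f : I -> R) i m : R :=
  acc d i m * y i * St d i * Cs d m / (f i * Fs d m).
Definition Eud (y f : I -> R) i m : R :=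
  rhos d m * f i * Fs d m ^+ 3 * Tud y f i m.
(* ftK = the vector (f_i(tK))_i *)
Definition Tpl (ftK : I -> R) i m : R :=
  acc d i m * gran d i * Dt d i * Cs d m / (ftK i * Fs d m).
Definition Epl (ftK : I -> R) i m : R :=
  rhos d m * ftK i * Fs d m ^+ 3 * Tpl ftK i m.
Definition Texec (f z : I -> R) i : R :=
  \sum_m acc d i m * z i * (lam d i * Cs d m / (f i * Fs d m))
  + (1 - z i) * (lam d i * Cu d i / Fu d i).
Definition Eexec (z : I -> R) i : R :=
  \sum_m acc d i m * z i * rhos d m * Fs d m ^+ 2 * lam d i * Cs d m
  + (1 - z i) * rhou d i * Fu d i ^+ 2 * lam d i * Cu d i.
Definition gedge i (dd : R) : R := 1 - (1 - dd / (Dt d i + St d i)) ^+ 2.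
Definition Acc (y z : I -> R) i : R :=
  z i * gedge i (gran d i * Dt d i + St d i * y i) + (1 - z i) * glocal d i.

(* f_i(tK): the variable f_i(tau) if tau = tK, otherwise the fixed constant fK_i *)
Definition f_tK (t K tau : nat) (fK f : I -> R) : I -> R :=
  fun i => if tau == (t * K)%N then f i else fK i.

Definition obj1 (b f z : I -> R) (y : I -> R) : R :=
  \sum_i Hq d i * z i * \sum_m (Tul y b i m + Tud y f i m)
  + Eq d * \sum_i \sum_m z i * (Eul y b i m + Eud y f i m)
  - Vw d * \sum_i Acc y z i.
Definition obj2 (y f z : I -> R) (b : I -> R) : R :=
  \sum_i Hq d i * z i * \sum_m (Tul y b i m + Tofld b i m)
  + Eq d * \sum_i \sum_m z i * (Eul y b i m + Eofld b i m).
Definition obj3 (t K tau : nat) (fK y b z : I -> R) (f : I -> R) : R :=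
  \sum_i Hq d i * (\sum_m Tpl (f_tK t K tau fK f) i m / K%:R
                   + z i * \sum_m Tud y f i m + Texec f z i)
  + Eq d * \sum_i (\sum_m Epl (f_tK t K tau fK f) i m / K%:R
                   + \sum_m z i * Eud y f i m + Eexec z i).
Definition obj4 (y b f : I -> R) (z : I -> R) : R :=
  \sum_i Hq d i * (z i * \sum_m (Tul y b i m + Tud y f i m + Tofld b i m)
                   + Texec f z i)
  + Eq d * \sum_i (\sum_m z i * (Eul y b i m + Eud y f i m + Eofld b i m)
                   + Eexec z i)
  - Vw d * \sum_i Acc y z i.

Definition feas1 (y : I -> R) : Prop := forall i, 0 <= y i <= 1.
Definition feas2 (b : I -> R) : Prop :=
  (forall i, 0 < b i <= 1) /\ (forall m, \sum_i acc d i m * b i <= 1).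
Definition feas3 (f : I -> R) : Prop :=
  (forall i, 0 < f i <= 1) /\ (forall m, \sum_i acc d i m * f i <= 1).
Definition feas4 (z : I -> R) : Prop := forall i, 0 <= z i <= 1.

End Model.

Definition convex_set (R : realType) (I : finType) (S : (I -> R) -> Prop) : Prop :=
  forall (u v : I -> R) (l : R), S u -> S v -> 0 <= l <= 1 ->
    S (fun i => l * u i + (1 - l) * v i).
Definition convex_on (R : realType) (I : finType) (S : (I -> R) -> Prop)
  (F : (I -> R) -> R) : Prop :=
  forall (u v : I -> R) (l : R), S u -> S v -> 0 <= l <= 1 ->
    F (fun i => l * u i + (1 - l) * v i) <= l * F u + (1 - l) * F v.
Definition convex_problem (R : realType) (I : finType) (S : (I -> R) -> Prop)
  (F : (I -> R) -> R) : Prop := convex_set S /\ convex_on S F.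

(* Main.v *)
Require Import Defs.
From HB Require Import structures.
From mathcomp Require Import all_boot all_order all_algebra.
From mathcomp Require Import reals exp.
From mathcomp Require Import complex.
From mathcomp Require Import ring lra.
Import Order.TTheory GRing.Theory Num.Theory.
Local Open Scope ring_scope.
Set Implicit Arguments. Unset Strict Implicit.

Section Aux.
Variable R : realType.

Lemma ln_le_sub1 (p : R) : 0 < p -> ln p <= p - 1.
Proof.
move=> p0; have := @le_ln1Dx R (p - 1).
have -> : 1 + (p - 1) = p by ring.
apply; lra.
Qed.

Lemma ln_concave (a p q : R) : 0 <= a <= 1 -> 0 < p -> 0 < q ->
  a * ln p + (1 - a) * ln q <= ln (a * p + (1 - a) * q).
Proof.
move=> /andP[a0 a1] p0 q0.
have m0 : 0 < a * p + (1 - a) * q.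
  case: (ltrP 0 a) => ha.
    by apply: ltr_pwDl; [apply: mulr_gt0|apply: mulr_ge0; lra].
  have -> : a = 0 by lra.
  by rewrite mul0r add0r subr0 mul1r.
set m := a * p + (1 - a) * q in m0 *.
have h1 := @ln_le_sub1 (p / m) (divr_gt0 p0 m0).
have h2 := @ln_le_sub1 (q / m) (divr_gt0 q0 m0).
rewrite ln_div ?posrE // in h1; rewrite ln_div ?posrE // in h2.
have e : a * (p / m - 1) + (1 - a) * (q / m - 1) = 0.
  rewrite /m; field; rewrite -/m; lra.
have : a * (ln p - ln m) + (1 - a) * (ln q - ln m) <= 0.
  rewrite -e; apply: lerD; apply: ler_wpM2l => //; lra.
lra.
Qed.

Lemma inv_convex (l a b : R) : 0 <= l <= 1 -> 0 < a -> 0 < b ->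
  (l * a + (1 - l) * b)^-1 <= l * a^-1 + (1 - l) * b^-1.
Proof.
move=> /andP[l0 l1] a0 b0.
have m0 : 0 < l * a + (1 - l) * b.
  case: (ltrP 0 l) => ha.
    by apply: ltr_pwDl; [apply: mulr_gt0|apply: mulr_ge0; lra].
  have -> : l = 0 by lra.
  by rewrite mul0r add0r subr0 mul1r.
rewrite -subr_ge0.
have -> : l * a^-1 + (1 - l) * b^-1 - (l * a + (1 - l) * b)^-1 =
  l * (1 - l) * (a - b) ^+ 2 / (a * b * (l * a + (1 - l) * b)).
  field; apply/and3P; split; rewrite ?lt0r_neq0 //.
apply: divr_ge0; last by apply: ltW; rewrite !mulr_gt0.
by apply: mulr_ge0; [apply: mulr_ge0; lra| apply: sqr_ge0].
Qed.


Lemma mix_gt0 (l u v : R) : 0 <= l <= 1 -> 0 < u -> 0 < v -> 0 < l * u + (1 - l) * v.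
Proof.
move=> /andP[l0 l1] u0 v0.
case: (ltrP 0 l) => ha.
  by apply: ltr_pwDl; [apply: mulr_gt0|apply: mulr_ge0; lra].
have -> : l = 0 by lra.
by rewrite mul0r add0r subr0 mul1r.
Qed.

Lemma phi_concave (c w1 w2 l : R) : 0 <= c -> 0 < w1 -> 0 < w2 -> 0 <= l <= 1 ->
  l * (w1 * ln (1 + c / w1)) + (1 - l) * (w2 * ln (1 + c / w2))
  <= (l * w1 + (1 - l) * w2) * ln (1 + c / (l * w1 + (1 - l) * w2)).
Proof.
move=> c0 w10 w20 hl.
have w0 := mix_gt0 hl w10 w20.
set w := l * w1 + (1 - l) * w2 in w0 *.
have /andP[l0 l1] := hl.
have ha : 0 <= l * w1 / w <= 1.
  apply/andP; split; first by apply: divr_ge0; [apply: mulr_ge0|]; lra.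
  rewrite ler_pdivrMr // mul1r /w; have : 0 <= (1 - l) * w2 by apply: mulr_ge0; lra.
  lra.
have p0 : 0 < 1 + c / w1 by apply: ltr_pwDl => //; apply: divr_ge0 => //; lra.
have q0 : 0 < 1 + c / w2 by apply: ltr_pwDl => //; apply: divr_ge0 => //; lra.
have := ln_concave ha p0 q0.
have -> : l * w1 / w * (1 + c / w1) + (1 - l * w1 / w) * (1 + c / w2) = 1 + c / w.
  rewrite /w; field; rewrite -/w; apply/and3P; split; rewrite ?lt0r_neq0 //.
move=> h.
have := ler_wpM2l (ltW w0) h.
have -> : w * (l * w1 / w * ln (1 + c / w1) + (1 - l * w1 / w) * ln (1 + c / w2))
  = l * (w1 * ln (1 + c / w1)) + (1 - l) * (w2 * ln (1 + c / w2)).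
  rewrite /w; field; rewrite -/w; rewrite ?lt0r_neq0 //.
done.
Qed.

Lemma Tconv (c k N B l u v : R) : 0 <= c -> 0 <= k -> 0 < N -> 0 < B ->
  0 <= l <= 1 -> 0 < u -> 0 < v ->
  c / (1 * (l * u + (1 - l) * v) * B * ln (1 + k / (N * (l * u + (1 - l) * v) * B)))
  <= l * (c / (1 * u * B * ln (1 + k / (N * u * B))))
   + (1 - l) * (c / (1 * v * B * ln (1 + k / (N * v * B)))).
Proof.
move=> c0 k0 N0 B0 hl u0 v0.
have m0 := mix_gt0 hl u0 v0.
set m := l * u + (1 - l) * v in m0 *.
have /andP[l0 l1] := hl.
case: (eqVneq k 0) => [->|kn0].
  by rewrite !mul0r !addr0 ln1 !mulr0 !invr0 !mulr0 addr0.
have kp : 0 < k by rewrite lt0r kn0.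
have E x : 0 < x -> 1 * x * B * ln (1 + k / (N * x * B)) =
    (x * B) * ln (1 + (k / N) / (x * B)).
  move=> x0; rewrite mul1r; congr (_ * ln (1 + _)); field.
  by apply/and3P; split; rewrite ?lt0r_neq0.
have pos x : 0 < x -> 0 < (x * B) * ln (1 + (k / N) / (x * B)).
  move=> x0; apply: mulr_gt0; first exact: mulr_gt0.
  apply: ln_gt0; rewrite ltrDl; apply: divr_gt0; [exact: divr_gt0|exact: mulr_gt0].
rewrite !E //.
have hc := phi_concave (divr_ge0 k0 (ltW N0)) (mulr_gt0 u0 B0) (mulr_gt0 v0 B0) hl.
rewrite (_ : l * (u * B) + (1 - l) * (v * B) = m * B) in hc; last by rewrite /m; ring.
set ru := _ * ln _ in hc; set rv := _ * ln _ in hc; set rm := _ * ln _ in hc.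
have ru0 : 0 < ru := pos _ u0. have rv0 : 0 < rv := pos _ v0.
have rm0 : 0 < rm := pos _ m0.
have mix0 := mix_gt0 hl ru0 rv0.
apply: (@le_trans _ _ (c * (l * ru + (1 - l) * rv)^-1)).
  apply: ler_wpM2l => //; rewrite lef_pV2 ?posrE //.
rewrite -[l * (c / ru)]mulrCA -[(1 - l) * (c / rv)]mulrCA -mulrDr.
apply: ler_wpM2l => //; exact: inv_convex.
Qed.

Lemma invlin (c F l u v : R) : 0 <= c -> 0 < F -> 0 <= l <= 1 -> 0 < u -> 0 < v ->
  c / ((l * u + (1 - l) * v) * F) <= l * (c / (u * F)) + (1 - l) * (c / (v * F)).
Proof.
move=> c0 F0 hl u0 v0.
have -> : (l * u + (1 - l) * v) * F = l * (u * F) + (1 - l) * (v * F) by ring.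
rewrite -[l * (c / _)]mulrCA -[(1 - l) * (c / _)]mulrCA -mulrDr.
apply: ler_wpM2l => //; apply: inv_convex => //; exact: mulr_gt0.
Qed.

Lemma sq_convex (l a b : R) : 0 <= l <= 1 ->
  (l * a + (1 - l) * b) ^+ 2 <= l * a ^+ 2 + (1 - l) * b ^+ 2.
Proof.
move=> /andP[l0 l1]; rewrite -subr_ge0.
have -> : l * a ^+ 2 + (1 - l) * b ^+ 2 - (l * a + (1 - l) * b) ^+ 2
  = l * (1 - l) * (a - b) ^+ 2 by ring.
apply: mulr_ge0; [apply: mulr_ge0; lra | exact: sqr_ge0].
Qed.

End Aux.

Section Cvx.
Variables (R : realType) (I : finType) (S : (I -> R) -> Prop).

Lemma cvx_add F G : convex_on S F -> convex_on S G -> convex_on S (fun x => F x + G x).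
Proof.
move=> hF hG u v l Su Sv hl.
apply: le_trans (lerD (hF u v l Su Sv hl) (hG u v l Su Sv hl)) _.
by rewrite le_eqVlt; apply/orP; left; apply/eqP; ring.
Qed.

Lemma cvx_sum (J : finType) (F : J -> (I -> R) -> R) :
  (forall j, convex_on S (F j)) -> convex_on S (fun x => \sum_j F j x).
Proof.
move=> hF u v l Su Sv hl.
have -> : l * (\sum_j F j u) + (1 - l) * (\sum_j F j v)
  = \sum_j (l * F j u + (1 - l) * F j v) by rewrite big_split /= !mulr_sumr.
by apply: ler_sum => j _; apply: hF.
Qed.

Lemma cvx_scal c F : 0 <= c -> convex_on S F -> convex_on S (fun x => c * F x).
Proof.
move=> c0 hF u v l Su Sv hl.
apply: le_trans (ler_wpM2l c0 (hF u v l Su Sv hl)) _.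
by rewrite le_eqVlt; apply/orP; left; apply/eqP; ring.
Qed.

Lemma cvx_scar c F : 0 <= c -> convex_on S F -> convex_on S (fun x => F x * c).
Proof.
move=> c0 hF u v l Su Sv hl.
apply: le_trans (ler_wpM2r c0 (hF u v l Su Sv hl)) _.
by rewrite le_eqVlt; apply/orP; left; apply/eqP; ring.
Qed.

Lemma cvx_const c : convex_on S (fun _ => c).
Proof.
by move=> u v l _ _ _; rewrite le_eqVlt; apply/orP; left; apply/eqP; ring.
Qed.

Lemma cvx_linS F : (forall u v l, S u -> S v -> 0 <= l <= 1 ->
   F (fun i => l * u i + (1 - l) * v i) = l * F u + (1 - l) * F v) ->
  convex_on S F.
Proof. by move=> h u v l Su Sv hl; rewrite h. Qed.

Lemma cvx_negsum (J : finType) c (G : J -> (I -> R) -> R) : 0 <= c ->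
  (forall j, convex_on S (fun x => - G j x)) ->
  convex_on S (fun x => - (c * \sum_j G j x)).
Proof.
move=> c0 hG u v l Su Sv hl.
have E x : - (c * \sum_j G j x) = c * \sum_j - G j x by rewrite sumrN mulrN.
rewrite !E; exact: (cvx_scal c0 (cvx_sum hG)).
Qed.

End Cvx.

Section Feas.
Variable R : realType.

Lemma box_mix (l u v : R) : 0 <= l <= 1 -> 0 <= u <= 1 -> 0 <= v <= 1 ->
  0 <= l * u + (1 - l) * v <= 1.
Proof.
move=> /andP[l0 l1] /andP[u0 u1] /andP[v0 v1]; apply/andP; split.
  by apply: addr_ge0; apply: mulr_ge0; lra.
have : l * u <= l * 1 by apply: ler_wpM2l.
have : (1 - l) * v <= (1 - l) * 1 by apply: ler_wpM2l; lra.
lra.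
Qed.

Lemma box_mixp (l u v : R) : 0 <= l <= 1 -> 0 < u <= 1 -> 0 < v <= 1 ->
  0 < l * u + (1 - l) * v <= 1.
Proof.
move=> hl /andP[u0 u1] /andP[v0 v1].
have /andP[_ ->] := box_mix hl (introT andP (conj (ltW u0) u1)) (introT andP (conj (ltW v0) v1)).
by rewrite mix_gt0.
Qed.

Lemma sum_mix (I : finType) (a u v : I -> R) (l : R) : 0 <= l <= 1 ->
  \sum_i a i * u i <= 1 -> \sum_i a i * v i <= 1 ->
  \sum_i a i * (l * u i + (1 - l) * v i) <= 1.
Proof.
move=> /andP[l0 l1] hu hv.
have -> : \sum_i a i * (l * u i + (1 - l) * v i)
   = l * \sum_i a i * u i + (1 - l) * \sum_i a i * v i.
  by rewrite !mulr_sumr -big_split /=; apply: eq_bigr => i _; ring.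
have : l * \sum_i a i * u i <= l * 1 by apply: ler_wpM2l.
have : (1 - l) * \sum_i a i * v i <= (1 - l) * 1 by apply: ler_wpM2l; lra.
lra.
Qed.

Lemma acc_cvx1 (z0 g x S Q l u v : R) : 0 <= z0 -> 0 <= l <= 1 ->
  - (z0 * (1 - (1 - (x + S * (l * u + (1 - l) * v)) / Q) ^+ 2) + (1 - z0) * g)
  <= l * - (z0 * (1 - (1 - (x + S * u) / Q) ^+ 2) + (1 - z0) * g)
   + (1 - l) * - (z0 * (1 - (1 - (x + S * v) / Q) ^+ 2) + (1 - z0) * g).
Proof.
move=> z0p hl.
have -> : 1 - (x + S * (l * u + (1 - l) * v)) / Q
  = l * (1 - (x + S * u) / Q) + (1 - l) * (1 - (x + S * v) / Q) by ring.
set a := 1 - (x + S * u) / Q; set b := 1 - (x + S * v) / Q.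
have h := sq_convex a b hl.
rewrite -subr_ge0.
have -> : l * - (z0 * (1 - a ^+ 2) + (1 - z0) * g) + (1 - l) * - (z0 * (1 - b ^+ 2) + (1 - z0) * g)
  - - (z0 * (1 - (l * a + (1 - l) * b) ^+ 2) + (1 - z0) * g)
  = z0 * (l * a ^+ 2 + (1 - l) * b ^+ 2 - (l * a + (1 - l) * b) ^+ 2) by ring.
by apply: mulr_ge0 => //; rewrite subr_ge0.
Qed.

Lemma constw (r w F c : R) : 0 < w -> 0 < F ->
  r * w * F ^+ 3 * (c / (w * F)) = r * F ^+ 2 * c.
Proof. by move=> w0 F0; field; rewrite !lt0r_neq0. Qed.

End Feas.

Unset Implicit Arguments. Set Strict Implicit.

Ltac lin := apply: cvx_linS => u v l Su Sv hl /=; ring.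

Theorem theorem2 (R : realType) (I M : finType) (d : data R I M)
  (t K tau : nat) (y b f z fK : I -> R)
  (hK : (0 < K)%N) (htau : (t * K <= tau < t * K + K)%N)
  (hH : forall i, 0 <= Hq d i) (hE : 0 <= Eq d) (hV : 0 < Vw d)
  (ha01 : forall i m, acc d i m = 0 \/ acc d i m = 1)
  (ha1 : forall i, \sum_m acc d i m <= 1)
  (hx : forall i, 0 <= gran d i <= 1)
  (hD : forall i, 0 < Dt d i) (hS : forall i, 0 < St d i)
  (hlam : forall i, 0 < lam d i) (hp : forall i, 0 < pw d i)
  (hCi : forall i, 0 < Cu d i) (hFi : forall i, 0 < Fu d i)
  (hrhoi : forall i, 0 < rhou d i)
  (hCm : forall m, 0 < Cs d m) (hFm : forall m, 0 < Fs d m)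
  (hrhom : forall m, 0 < rhos d m) (hBm : forall m, 0 < Bs d m)
  (hN0 : 0 < N0 d) (hdist : forall i m, 0 < dist d i m)
  (htheta : 2 <= theta d)
  (hgl : forall i, 0 <= glocal d i <= 1)
  (hy : forall i, 0 <= y i <= 1) (hb : forall i, 0 < b i <= 1)
  (hf : forall i, 0 < f i <= 1) (hz : forall i, 0 <= z i <= 1)
  (hfK : forall i, 0 < fK i <= 1) :
  convex_problem (@feas1 R I) (obj1 d b f z)
  /\ convex_problem (feas2 d) (obj2 d y f z)
  /\ convex_problem (feas3 d) (obj3 d t K tau fK y b z)
  /\ convex_problem (@feas4 R I) (obj4 d y b f).
Proof.
have z0 i : 0 <= z i by case/andP: (hz i).
have y0 i : 0 <= y i by case/andP: (hy i).
have a0 i m : 0 <= acc d i m by case: (ha01 i m) => ->.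
have k0 i m : 0 <= dist d i m `^ theta d * pw d i * ComplexField.Normc.normc (fad d i m) ^+ 2.
  by apply: mulr_ge0; [apply: mulr_ge0; [apply: powR_ge0|apply: ltW]|apply: sqr_ge0].
split; [split|split; [split|split; [split|split]]].
- by move=> u v l Su Sv hl i; apply: box_mix.
- rewrite /obj1; apply: cvx_add; first apply: cvx_add.
  + apply: cvx_sum => i; apply: cvx_scal; first exact: mulr_ge0.
    apply: cvx_sum => m; apply: cvx_add.
    * apply: cvx_linS => u v l _ _ _ /=; rewrite /Tul; case: eqP => _; ring.
    * rewrite /Tud; lin.
  + apply: cvx_scal => //; apply: cvx_sum => i; apply: cvx_sum => m.
    apply: cvx_scal => //; apply: cvx_add.
    * rewrite /Eul; apply: cvx_scal; first exact: ltW.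
      apply: cvx_linS => u v l _ _ _ /=; rewrite /Tul; case: eqP => _; ring.
    * rewrite /Eud; apply: cvx_scal.
        by apply: mulr_ge0; [apply: mulr_ge0; apply: ltW => //; case/andP: (hf i)|apply: exprn_ge0; apply: ltW].
      rewrite /Tud; lin.
  + apply: cvx_negsum; first exact: ltW.
    move=> i u v l _ _ hl /=; rewrite /Acc /gedge; exact: acc_cvx1.
- move=> u v l [Su1 Su2] [Sv1 Sv2] hl; split.
    by move=> i; apply: box_mixp.
  by move=> m; apply: sum_mix.
- have TC (c : I -> R) i m : (forall i, 0 <= c i) -> convex_on (feas2 d)
      (fun b => if acc d i m == 0 then 0 else c i / rate d b i m).
    move=> c0 u v l [Su _] [Sv _] hl /=; rewrite /rate.
    case: eqP => [_|]; first by rewrite !mulr0 addr0.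
    case: (ha01 i m) => // -> _.
    apply: Tconv => //; try exact: k0.
      by case/andP: (Su i).
    by case/andP: (Sv i).
  have c1 i : 0 <= y i * St d i by apply: mulr_ge0 => //; apply: ltW.
  have c2 i : 0 <= lam d i by apply: ltW.
  rewrite /obj2; apply: cvx_add.
  + apply: cvx_sum => i; apply: cvx_scal; first exact: mulr_ge0.
    apply: cvx_sum => m; apply: cvx_add; first exact: (TC (fun i => y i * St d i)).
    exact: (TC (lam d)).
  + apply: cvx_scal => //; apply: cvx_sum => i; apply: cvx_sum => m.
    apply: cvx_scal => //; apply: cvx_add.
    * rewrite /Eul; apply: cvx_scal; first exact: ltW.
      exact: (TC (fun i => y i * St d i)).
    * rewrite /Eofld; apply: cvx_scal; first exact: ltW.
      exact: (TC (lam d)).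
- move=> u v l [Su1 Su2] [Sv1 Sv2] hl; split.
    by move=> i; apply: box_mixp.
  by move=> m; apply: sum_mix.
- have pos (x : I -> R) i : feas3 d x -> 0 < x i by case=> h _; case/andP: (h i).
  have IL (c : R) (F : R) i : 0 <= c -> 0 < F -> convex_on (feas3 d) (fun f => c / (f i * F)).
    move=> c0 F0 u v l Su Sv hl /=; apply: invlin => //; exact: pos.
  have CW (r c F : R) i : 0 < F -> convex_on (feas3 d) (fun f => r * f i * F ^+ 3 * (c / (f i * F))).
    move=> F0; apply: cvx_linS => u v l Su Sv hl /=.
    rewrite !constw //; [ring|exact: pos|exact: pos|].
    by apply: mix_gt0 => //; exact: pos.
  have Kp : 0 <= (K%:R : R)^-1 by rewrite invr_ge0 ler0n.
  rewrite /obj3; apply: cvx_add.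
  + apply: cvx_sum => i; apply: cvx_scal => //; apply: cvx_add; first apply: cvx_add.
    * apply: cvx_sum => m; apply: cvx_scar => //; rewrite /Tpl /f_tK.
      case: (tau == (t * K)%N); last exact: cvx_const.
      apply: IL => //; apply: mulr_ge0; last exact: ltW.
      apply: mulr_ge0; last exact: ltW.
      by apply: mulr_ge0 => //; case/andP: (hx i).
    * apply: cvx_scal => //; apply: cvx_sum => m; rewrite /Tud; apply: IL => //.
      by apply: mulr_ge0; [apply: mulr_ge0; [apply: mulr_ge0|apply: ltW]|apply: ltW].
    * rewrite /Texec; apply: cvx_add; last exact: cvx_const.
      apply: cvx_sum => m; apply: cvx_scal; first exact: mulr_ge0.
      rewrite -/(_ / _); apply: IL => //; apply: mulr_ge0; apply: ltW => //.
  + apply: cvx_scal => //; apply: cvx_sum => i; apply: cvx_add; first apply: cvx_add.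
    * apply: cvx_sum => m; apply: cvx_scar => //; rewrite /Epl /Tpl /f_tK.
      case: (tau == (t * K)%N); last exact: cvx_const.
      exact: CW.
    * apply: cvx_sum => m; apply: cvx_scal => //; rewrite /Eud /Tud; exact: CW.
    * exact: cvx_const.
- by move=> u v l Su Sv hl i; apply: box_mix.
- rewrite /obj4; apply: cvx_add; first apply: cvx_add.
  + apply: cvx_sum => i; apply: cvx_scal => //; apply: cvx_add; first by lin.
    rewrite /Texec; apply: cvx_add; first apply: cvx_sum => m; lin.
  + apply: cvx_scal => //; apply: cvx_sum => i; apply: cvx_add.
      by apply: cvx_sum => m; lin.
    rewrite /Eexec; apply: cvx_add; first apply: cvx_sum => m; lin.
  + apply: cvx_negsum; first exact: ltW.
    move=> i; rewrite /Acc; lin.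
Qed.
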